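(* Let $T$ be a $C_{p^rq^s}$-transfer system. Then the connected component of $(r,s)$ in $T$ is a rectangle, i.e., equals $\{(i,j): a\le i\le r,\ b\le j\le s\}$ for some vertex $(a,b)$.
   Context: $p,q$ are distinct primes and $r,s\ge 0$ integers. The subgroups of $C_{p^rq^s}$ are identified with grid points $(i,j)$, $0\le i\le r$, $0\le j\le s$, where $(i,j)$ stands for $C_{p^iq^j}$. A $C_{p^rq^s}$-transfer system is a partial order $\to$ on these vertices such that: $(i_1,j_1)\to(i_2,j_2)$ implies $i_1\le i_2$, $j_1\le j_2$; it is reflexive and transitive; and $(i_1,j_1)\to(i_2,j_2)$ implies $(\min\{i_1,a\},\min\{j_1,b\})\to(\min\{i_2,a\},\min\{j_2,b\})$ for every vertex $(a,b)$. Connected components are those of the underlying undirected graph. *)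

(* Defs.v *)
From mathcomp Require Import all_boot all_order.
Set Implicit Arguments. Unset Strict Implicit. Unset Printing Implicit Defensive.

(* Vertices (i,j), 0<=i<=r, 0<=j<=s, standing for the subgroup C_{p^i q^j}. *)
Definition vertex (r s : nat) := ('I_r.+1 * 'I_s.+1)%type.

Definition vmin (r s : nat) (x y : vertex r s) : vertex r s :=
  (if x.1 <= y.1 then x.1 else y.1, if x.2 <= y.2 then x.2 else y.2).

(* A C_{p^r q^s}-transfer system: a partial order -> on the vertices,
   refining the componentwise order, closed under restriction (min). *)
Definition transfer_system (r s : nat) (T : rel (vertex r s)) : Prop :=
  [/\ (forall x y, T x y -> (x.1 <= y.1)%N /\ (x.2 <= y.2)%N),
      reflexive T, transitive T, antisymmetric T &
      (forall x y c, T x y -> T (vmin x c) (vmin y c))].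

Definition top_vertex (r s : nat) : vertex r s := (ord_max, ord_max).

Definition undirected (r s : nat) (T : rel (vertex r s)) : rel (vertex r s) :=
  fun x y => T x y || T y x.

Definition component (r s : nat) (T : rel (vertex r s)) (v : vertex r s)
  : {set vertex r s} := [set w | connect (undirected T) v w].

Definition rectangle (r s : nat) (a : vertex r s) : {set vertex r s} :=
  [set w : vertex r s | (a.1 <= w.1)%N && (a.2 <= w.2)%N].

(* Main.v *)
Require Import Defs.
From mathcomp Require Import all_boot all_order.
From mathcomp Require Import zify.

Lemma vminC (r s : nat) (x y : vertex r s) : vmin x y = vmin y x.
Proof.
case: x y => [x1 x2] [y1 y2]; rewrite /vmin /=.
congr pair; case: ifP => h; case: ifP => h' //; apply/val_inj => /=; lia.
Qed.

Lemma vmin_r (r s : nat) (x y : vertex r s) :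
  (y.1 <= x.1)%N -> (y.2 <= x.2)%N -> vmin x y = y.
Proof.
case: x y => [x1 x2] [y1 y2] /= h1 h2; rewrite /vmin /=.
congr pair; case: ifP => h //; apply/val_inj => /=; lia.
Qed.

Lemma step (r s : nat) (T : rel (vertex r s)) t x y d :
  transfer_system T -> T d t -> T d x -> undirected T x y ->
  exists d', T d' t && T d' y.
Proof.
case=> hle hrefl htr hanti hres hdt hdx /orP [hxy|hyx].
  by exists d; rewrite hdt (htr _ _ _ hdx hxy).
exists (vmin y d).
have [hd1 hd2] := hle _ _ hdx.
have [hy1 hy2] := hle _ _ hyx.
have h1 := hres _ _ d hyx. rewrite (@vmin_r _ _ x) // in h1.
have h2 := hres _ _ y hdx. rewrite (@vmin_r _ _ x) // vminC in h2.
by rewrite h2 (htr _ _ _ h1 hdt).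
Qed.

Lemma aux1 (a1 a2 d1 d2 : nat) : (d1 < a1)%N ->
  (a1 + a2 <= (if a1 <= d1 then a1 else d1) + (if a2 <= d2 then a2 else d2))%N -> False.
Proof. by case: (leqP a1 d1); case: (leqP a2 d2) => *; lia. Qed.

Theorem mainTheorem10 (p q r s : nat) (T : rel (vertex r s)) :
  prime p -> prime q -> p <> q ->
  transfer_system T ->
  exists a : vertex r s, component T (top_vertex r s) = rectangle a.
Proof.
move=> _ _ _ hT.
have hT' := hT; case: hT' => hle hrefl htr hanti hres.
set t := top_vertex r s.
have inv : forall x, connect (undirected T) t x -> exists d, T d t && T d x.
  move=> x /connectP [pth Hp0 ->] {x}.
  suff H : forall z pth, path (undirected T) z pth ->
      (exists d, T d t && T d z) -> exists d, T d t && T d (last z pth).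
    by apply: H Hp0 _; exists t; rewrite hrefl.
  move=> z0 pth0; elim: pth0 z0 => [|y pth1 IH] z /= Hp [d /andP [hdt hdz]].
    by exists d; rewrite hdt.
  case/andP: Hp => hzy Hp.
  apply: IH => //.
  exact: (@step _ _ _ _ _ _ _ hT hdt hdz hzy).
have [a Hat Hmin] := arg_minnP (fun d : vertex r s => (d.1 + d.2)%N) (P := fun d => T d t) (hrefl t).
have amin : forall d, T d t -> (a.1 <= d.1)%N /\ (a.2 <= d.2)%N.
  move=> d hdt.
  have hm : T (vmin a d) t.
    have := hres _ _ d Hat; rewrite (@vmin_r _ _ t).
    + by move=> h; exact: htr _ _ _ h hdt.
    + by rewrite /t /top_vertex /= -ltnS ltn_ord.
    + by rewrite /t /top_vertex /= -ltnS ltn_ord.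
  have := Hmin _ hm; rewrite /vmin /=.
  move=> H; split; apply/negPn/negP; rewrite -ltnNge => h.
    by rewrite !(fun_if (@nat_of_ord _)) in H; exact: (@aux1 _ _ _ _ h H).
  by rewrite !(fun_if (@nat_of_ord _)) addnC [X in _ <= X]addnC in H; exact: (@aux1 _ _ _ _ h H).
exists a; apply/setP => w; rewrite !inE.
apply/idP/idP.
  move/inv => [d /andP [hdt hdw]].
  have [h1 h2] := amin d hdt; have [h3 h4] := hle _ _ hdw.
  apply/andP; split; [exact: leq_trans h1 h3 | exact: leq_trans h2 h4].
case/andP => h1 h2.
have haw : T a w.
  have := hres _ _ w Hat.
  rewrite (@vmin_r _ _ t w).
  + by rewrite vminC (@vmin_r _ _ w a).
  + by rewrite /t /top_vertex /= -ltnS ltn_ord.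
  + by rewrite /t /top_vertex /= -ltnS ltn_ord.
apply: (connect_trans (y:=a)); apply: connect1; rewrite /undirected.
  by rewrite Hat orbT.
by rewrite haw.
Qed.
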